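(* Let $V\in\mathcal{UM}$, $m=\deg(V,0)$, $\xi>0$, $s_0=V_*(\xi)$, and let $\bar\xi>0$ be the unique number with $\bar V(\bar\xi)=V(\xi)$. Let $\gamma\in\mathbb R$ be such that $\bar V\neq V\circ\gamma$ (i.e. $V(-x)\ne V(\gamma x)$ for some $x$), and let $N\ge1$ be the integer with $W^{(k)}(s_0)=\gamma\bar W^{(k)}(s_0)$ for $1\le k<N$ and $W^{(N)}(s_0)\ne\gamma\bar W^{(N)}(s_0)$ (it exists). Then $$\lim_{\theta\searrow V(\xi)}D^{(N)}(a_\xi-\gamma\bar a_{\bar\xi})(\theta)=\pm\infty,$$ more precisely $+\infty$ if $\gamma\bar W^{(N)}(s_0)>W^{(N)}(s_0)$ and $-\infty$ if $\gamma\bar W^{(N)}(s_0)<W^{(N)}(s_0)$.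
   Context: $\mathcal{UM}$: real-analytic $V:\mathbb R\to\mathbb R_{\ge0}$ with $V(0)=0$, $yV'(y)>0$ for $y\neq0$, $V(y)\to\infty$ as $y\to\pm\infty$; $m=\deg(V,0)$ is the least $m$ with $V^{(m)}(0)\ne0$. $V_*:\mathbb R\to\mathbb R$ is the bi-analytic map with $V_*'>0$ and $V_*^m=V$; $W=V_*^{-1}$; $\bar V(y)=V(-y)$, $\bar W(x)=-W(-x)$ (the inverse of $\bar V_*(y)=-V_*(-y)$). For $\xi>0$ and $\theta\ge V(\xi)$: $a_\xi(\theta)=\int_0^\xi\frac{dy}{\sqrt2\sqrt{\theta-V(y)}}$, and $\bar a_{\bar\xi}(\theta)=\int_0^{\bar\xi}\frac{dy}{\sqrt2\sqrt{\theta-\bar V(y)}}$; these are analytic on $(V(\xi),\infty)$. For $\alpha\ge0$, $D_\alpha f(\theta)=m\frac{d}{d\theta}(\theta^\alpha f(\theta))$, and $D^{(n)}=D_{1-1/m}\circ\cdots\circ D_{1-1/m}\circ D_{1/2-1/m}$ ($n-1$ factors $D_{1-1/m}$) for $n\ge1$. *)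

(* Defs.v *)
From Stdlib Require Import Reals.
From Coquelicot Require Import Coquelicot.
Open Scope R_scope.

Definition real_analytic (f : R -> R) : Prop :=
  forall x0 : R, exists r : R, 0 < r /\ exists a : nat -> R,
    forall x, Rabs (x - x0) < r -> is_pseries a (x - x0) (f x).

Definition UM (V : R -> R) : Prop :=
  real_analytic V /\
  (forall y, 0 <= V y) /\
  V 0 = 0 /\
  (forall y, y <> 0 -> y * Derive V y > 0) /\
  is_lim V p_infty p_infty /\
  is_lim V m_infty p_infty.

Definition is_deg0 (V : R -> R) (m : nat) : Prop :=
  Derive_n V m 0 <> 0 /\ forall k, (k < m)%nat -> Derive_n V k 0 = 0.

Definition is_Vstar (V : R -> R) (m : nat) (Vs W : R -> R) : Prop :=
  real_analytic Vs /\ real_analytic W /\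
  (forall y, W (Vs y) = y) /\ (forall x, Vs (W x) = x) /\
  (forall y, Derive Vs y > 0) /\
  (forall y, Vs y ^ m = V y).

Definition Vbar (V : R -> R) : R -> R := fun y => V (- y).
Definition Wbar (W : R -> R) : R -> R := fun x => - W (- x).

Definition a_fun (V : R -> R) (xi : R) : R -> R :=
  fun theta => RInt (fun y => / (sqrt 2 * sqrt (theta - V y))) 0 xi.

Definition D_op (m : nat) (alpha : R) (f : R -> R) : R -> R :=
  fun theta => INR m * Derive (fun t => Rpower t alpha * f t) theta.

Fixpoint Dn (m : nat) (n : nat) (f : R -> R) : R -> R :=
  match n with
  | O => f
  | S O => D_op m (1/2 - 1 / INR m) f
  | S k => D_op m (1 - 1 / INR m) (Dn m k f)
  end.

(* Main.v *)
Require Import Defs.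
From Stdlib Require Import Reals Lra Lia Psatz FunctionalExtensionality.
From Coquelicot Require Import Coquelicot.
Open Scope R_scope.

Lemma exd_plus (f g : R -> R) x : ex_derive f x -> ex_derive g x -> ex_derive (fun y => f y + g y) x.
Proof. intros; apply (@ex_derive_plus R_AbsRing R_NormedModule); auto. Qed.
Lemma exd_scal (f : R -> R) a x : ex_derive f x -> ex_derive (fun y => a * f y) x.
Proof. intros; apply ex_derive_scal; auto. Qed.
Lemma exd_mult (f g : R -> R) x : ex_derive f x -> ex_derive g x -> ex_derive (fun y => f y * g y) x.
Proof. intros; apply ex_derive_mult; auto. Qed.
Lemma exd_id x : ex_derive (fun y:R => y) x.
Proof. apply (@ex_derive_id R_AbsRing). Qed.
Lemma exd_comp (f g : R -> R) x : ex_derive f (g x) -> ex_derive g x -> ex_derive (fun y => f (g y)) x.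
Proof. intros; apply (@ex_derive_comp R_AbsRing R_NormedModule); auto. Qed.
Lemma exd_opp x : ex_derive (fun y:R => - y) x.
Proof. apply (@ex_derive_opp R_AbsRing R_NormedModule (fun y => y)); apply exd_id. Qed.
Lemma exd_const (a x : R) : ex_derive (fun _ => a) x.
Proof. apply (@ex_derive_const R_AbsRing R_NormedModule). Qed.

Definition smooth (f : R -> R) : Prop := forall k x, ex_derive (Derive_n f k) x.

Lemma smooth_exn f : smooth f -> forall k x, ex_derive_n f k x.
Proof. intros H [|k] x; simpl; auto. Qed.

Lemma smooth_cont f : smooth f -> forall k x, continuous (Derive_n f k) x.
Proof. intros H k x; apply (@ex_derive_continuous R_AbsRing R_NormedModule); apply H. Qed.

Lemma smooth_cont0 f : smooth f -> forall x, continuous f x.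
Proof. intros H x; apply (smooth_cont f H 0). Qed.

Lemma smooth_ex_derive f : smooth f -> forall x, ex_derive f x.
Proof. intros H x; apply (H 0%nat). Qed.

Lemma Derive_n_Derive f k x : Derive_n (Derive f) k x = Derive_n f (S k) x.
Proof.
  replace (S k) with (k+1)%nat by lia.
  rewrite <- (Derive_n_comp f k 1). reflexivity.
Qed.

Lemma Derive_n_Derive_fun f k : Derive_n (Derive f) k = Derive_n f (S k).
Proof. apply functional_extensionality; intro; apply Derive_n_Derive. Qed.

Lemma smooth_Derive f : smooth f -> smooth (Derive f).
Proof. intros H k x. rewrite Derive_n_Derive_fun. apply H. Qed.

Lemma Dn_plus f g : smooth f -> smooth g -> forall k x,
  Derive_n (fun y => f y + g y) k x = Derive_n f k x + Derive_n g k x.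
Proof.
  intros Hf Hg k x; apply Derive_n_plus; apply filter_forall; intros;
  apply smooth_exn; auto.
Qed.

Lemma Dn_plus_fun f g : smooth f -> smooth g -> forall k,
  Derive_n (fun y => f y + g y) k = fun x => Derive_n f k x + Derive_n g k x.
Proof. intros; apply functional_extensionality; intro; apply Dn_plus; auto. Qed.

Lemma smooth_plus f g : smooth f -> smooth g -> smooth (fun y => f y + g y).
Proof.
  intros Hf Hg k x. rewrite Dn_plus_fun; auto. apply exd_plus; auto.
Qed.

Lemma Dn_scal_fun f a k : Derive_n (fun y => a * f y) k = fun x => a * Derive_n f k x.
Proof. apply functional_extensionality; intro; apply Derive_n_scal_l. Qed.

Lemma smooth_scal f a : smooth f -> smooth (fun y => a * f y).
Proof.
  intros Hf k x. rewrite Dn_scal_fun. apply exd_scal; auto.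
Qed.

Lemma smooth_ext f g : (forall x, f x = g x) -> smooth f -> smooth g.
Proof.
  intros E H. replace g with f; auto. apply functional_extensionality; auto.
Qed.

Lemma smooth_minus f g : smooth f -> smooth g -> smooth (fun y => f y - g y).
Proof.
  intros Hf Hg. apply smooth_ext with (fun y => f y + (-1) * g y).
  intros; ring. apply smooth_plus; auto. apply smooth_scal; auto.
Qed.

Lemma Dn_minus f g : smooth f -> smooth g -> forall k x,
  Derive_n (fun y => f y - g y) k x = Derive_n f k x - Derive_n g k x.
Proof.
  intros Hf Hg k x.
  rewrite (Derive_n_ext _ (fun y => f y + (-1) * g y)); [|intros; ring].
  rewrite Dn_plus; auto. rewrite Derive_n_scal_l; ring. apply smooth_scal; auto.
Qed.

Lemma Dn_mulid f : smooth f -> forall k x,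
  Derive_n (fun y => y * f y) (S k) x = x * Derive_n f (S k) x + INR (S k) * Derive_n f k x.
Proof.
  intros Hf k. induction k; intro x.
  - simpl. rewrite Derive_mult. rewrite Derive_id. simpl. change (Derive (fun x0 : R => f x0) x) with (Derive f x). ring.
    apply exd_id. apply (Hf 0%nat).
  - change (Derive_n (fun y => y * f y) (S (S k)) x) with
      (Derive (Derive_n (fun y => y * f y) (S k)) x).
    rewrite (Derive_ext _ (fun x => x * Derive_n f (S k) x + INR (S k) * Derive_n f k x)); auto.
    rewrite Derive_plus. rewrite Derive_mult. rewrite Derive_scal. rewrite Derive_id.
    change (Derive (Derive_n f (S k)) x) with (Derive_n f (S (S k)) x).
    change (Derive (Derive_n f k) x) with (Derive_n f (S k) x).
    rewrite !S_INR. ring.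
    apply exd_id. apply Hf.
    apply exd_mult. apply exd_id. apply Hf.
    apply exd_scal. apply Hf.
Qed.

Lemma smooth_mulid f : smooth f -> smooth (fun y => y * f y).
Proof.
  intros Hf [|k] x.
  - simpl. apply exd_mult. apply exd_id. apply (Hf 0%nat).
  - rewrite (functional_extensionality (Derive_n (fun y => y * f y) (S k)) _ (Dn_mulid f Hf k)).
    apply exd_plus. apply exd_mult. apply exd_id. apply Hf.
    apply exd_scal. apply Hf.
Qed.

Lemma smooth_opp_comp f : smooth f -> smooth (fun y => f (- y)).
Proof.
  intros Hf k x.
  assert (E : Derive_n (fun y => f (- y)) k = fun x => (-1)^k * Derive_n f k (- x)).
  { apply functional_extensionality; intro; apply Derive_n_comp_opp.
    apply filter_forall; intros; apply smooth_exn; auto. }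
  rewrite E. apply exd_scal. apply exd_comp. apply Hf.
  apply exd_opp.
Qed.

Lemma smooth_const a : smooth (fun _ => a).
Proof.
  intros [|k] x. simpl. apply exd_const.
  rewrite (functional_extensionality (Derive_n (fun _ => a) (S k)) (fun _ => 0)).
  apply exd_const. intro; apply Derive_n_const.
Qed.

Lemma ball_R (x y e : R) : ball x e y <-> Rabs (y - x) < e.
Proof. split; intro H; exact H. Qed.

Lemma loc_ball (x e : R) (P : R -> Prop) : 0 < e -> (forall y, Rabs (y - x) < e -> P y) -> locally x P.
Proof. intros He H. exists (mkposreal e He). intros y Hy. apply H. exact Hy. Qed.

Lemma loc_open (x : R) (P : R -> Prop) :
  (forall y, P y -> exists e, 0 < e /\ forall z, Rabs (z - y) < e -> P z) ->
  P x -> locally x (fun y => locally y P).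
Proof.
  intros Ho Px. destruct (Ho x Px) as [e [He H]].
  apply (loc_ball x e); auto. intros y Hy.
  apply (loc_ball y (e - Rabs (y - x))). lra.
  intros z Hz. apply H. 
  replace (z - x) with ((z - y) + (y - x)) by ring.
  pose proof (Rabs_triang (z - y) (y - x)). lra.
Qed.

Lemma radius_ge (a : nat -> R) (r : R) (F : R -> R) :
  0 < r -> (forall x, Rabs x < r -> is_pseries a x (F x)) ->
  forall y, Rabs y < r -> Rbar_lt (Rabs y) (CV_radius a).
Proof.
  intros Hr H y Hy.
  set (r' := (Rabs y + r) / 2).
  assert (Hr' : Rabs r' < r). { unfold r'. pose proof (Rabs_pos y). rewrite Rabs_pos_eq; lra. }
  assert (L : is_lim_seq (fun n => a n * r' ^ n) 0).
  { apply is_lim_seq_ext with (fun n => scal (pow_n r' n) (a n)).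
    intro n. rewrite pow_n_pow. unfold scal; simpl. unfold mult; simpl. ring.
    apply ex_series_lim_0. exists (F r'). apply H. auto. }
  assert (Hle : Rbar_le (Rabs r') (CV_radius a)).
  { apply Rbar_not_lt_le. intro C. apply (CV_disk_outside a r' C). auto. }
  eapply Rbar_lt_le_trans; [| exact Hle]. simpl.
  unfold r'. pose proof (Rabs_pos y). rewrite (Rabs_pos_eq ((Rabs y + r)/2)); lra.
Qed.

Lemma ra_smooth f : real_analytic f -> smooth f.
Proof.
  intros H k x0. destruct (H x0) as [r [Hr [a Ha]]].
  assert (Rad : forall y, Rabs y < r -> Rbar_lt (Rabs y) (CV_radius a)).
  { apply radius_ge with (F := fun y => f (y + x0)); auto.
    intros y Hy. replace y with (y + x0 - x0) at 1 by ring. apply Ha.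
    replace (y + x0 - x0) with y by ring; auto. }
  set (g := fun x => PSeries a (x + - x0)).
  assert (Eq : forall t, Rabs (t - x0) < r -> f t = g t).
  { intros t Ht. unfold g. symmetry. apply is_pseries_unique. apply Ha. auto. }
  assert (L : locally x0 (fun t => Derive_n f k t = Derive_n g k t)).
  { assert (LL : locally x0 (fun y => locally y (fun t => Rabs (t - x0) < r))).
    { apply loc_open. intros y Hy. exists (r - Rabs (y - x0)). split. lra.
      intros z Hz. replace (z - x0) with ((z - y) + (y - x0)) by ring.
      pose proof (Rabs_triang (z - y) (y - x0)). lra.
      replace (x0 - x0) with 0 by ring. rewrite Rabs_R0; auto. }
    destruct LL as [e He]. exists e. intros y Hy. apply Derive_n_ext_loc.
    specialize (He y Hy). destruct He as [e' He']. exists e'. intros z Hz. apply Eq. apply He'. auto. }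
  apply ex_derive_ext_loc with (Derive_n g k).
  { destruct L as [e He]. exists e. intros y Hy. symmetry. apply He. auto. }
  assert (E : Derive_n g k = fun x => Derive_n (PSeries a) k (x + - x0)).
  { apply functional_extensionality. intro x. unfold g. apply Derive_n_comp_trans. }
  rewrite E. apply exd_comp.
  - replace (x0 + - x0) with 0 by ring.
    apply (ex_derive_n_PSeries (S k) a 0). apply Rad. rewrite Rabs_R0; auto.
  - apply (exd_plus (fun y => y) (fun _ => - x0)). apply exd_id. apply exd_const.
Qed.

Lemma pow_lt_base (a b : R) (n : nat) : 0 <= a -> a < b -> (1 <= n)%nat -> a ^ n < b ^ n.
Proof.
  intros Ha Hab Hn. induction n. lia.
  destruct n. simpl; lra.
  assert (IH : a ^ S n < b ^ S n) by (apply IHn; lia).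
  change (a * a ^ S n < b * b ^ S n).
  assert (0 <= a ^ S n) by (apply pow_le; auto).
  nra.
Qed.

Lemma pow_inj_pos (a b : R) (n : nat) : 0 <= a -> 0 <= b -> (1 <= n)%nat -> a ^ n = b ^ n -> a = b.
Proof.
  intros Ha Hb Hn E. destruct (Rtotal_order a b) as [H|[H|H]]; auto.
  - pose proof (pow_lt_base a b n Ha H Hn). lra.
  - pose proof (pow_lt_base b a n Hb H Hn). lra.
Qed.

Lemma deg_pos V m : is_deg0 V m -> V 0 = 0 -> (1 <= m)%nat.
Proof. intros [H _] H0. destruct m. simpl in H. contradiction. lia. Qed.

Lemma strict_incr (g : R -> R) : smooth g -> (forall y, Derive g y > 0) ->
  forall a b, a < b -> g a < g b.
Proof.
  intros Hs Hd a b Hab.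
  destruct (MVT_gen g a b (Derive g)) as [c [Hc E]].
  - intros x _. apply Derive_correct. apply smooth_ex_derive; auto.
  - intros x _. apply continuity_pt_filterlim. apply smooth_cont0; auto.
  - specialize (Hd c). nra.
Qed.

Lemma Vstar_facts V m Vs W : UM V -> is_deg0 V m -> is_Vstar V m Vs W ->
  (1 <= m)%nat /\ Vs 0 = 0 /\ W 0 = 0 /\ (exists k, m = (2 * k)%nat) /\
  (forall a b, a < b -> Vs a < Vs b) /\ smooth Vs /\ smooth W /\ smooth V.
Proof.
  intros [HVa [HV0 [HV00 _]]] Hd [HVsa [HWa [HWVs [HVsW [HVsd HVsm]]]]].
  assert (Hm : (1 <= m)%nat) by (apply (deg_pos V m); auto).
  assert (SVs : smooth Vs) by (apply ra_smooth; auto).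
  assert (Hinc := strict_incr Vs SVs HVsd).
  assert (Vs0 : Vs 0 = 0).
  { specialize (HVsm 0). rewrite HV00 in HVsm. destruct (Req_dec (Vs 0) 0) as [E|E]; auto. exfalso; apply (pow_nonzero _ m E); auto. }
  split; auto. split; auto. split. rewrite <- Vs0 at 1. auto.
  split.
  { destruct (Nat.Even_or_Odd m) as [[k Hk]|[k Hk]]. exists k; lia.
    exfalso. assert (Hn : Vs (-1) < 0) by (rewrite <- Vs0; apply Hinc; lra).
    specialize (HVsm (-1)). specialize (HV0 (-1)).
    rewrite Hk in HVsm. rewrite pow_add, pow_mult in HVsm.
    assert (0 < (Vs (-1) ^ 2) ^ k) by (apply pow_lt; nra).
    rewrite pow_1 in HVsm. set (t := (Vs (-1) ^ 2) ^ k) in *. nra. }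
  repeat split; auto; apply ra_smooth; auto.
Qed.

Lemma pow_even_opp (s : R) k : (- s) ^ (2 * k) = s ^ (2 * k).
Proof. rewrite !pow_mult. f_equal. ring. Qed.

Lemma exd_cpt (f : R -> R) x : ex_derive f x -> continuity_pt f x.
Proof. intro H. apply continuity_pt_filterlim. apply (@ex_derive_continuous R_AbsRing R_NormedModule). auto. Qed.

Lemma exd_cont (f : R -> R) x : ex_derive f x -> continuous f x.
Proof. intro H. apply (@ex_derive_continuous R_AbsRing R_NormedModule). auto. Qed.

Lemma exRInt_cont (f : R -> R) a b :
  (forall z, Rmin a b <= z <= Rmax a b -> continuous f z) -> ex_RInt f a b.
Proof. apply (@ex_RInt_continuous R_CompleteNormedModule). Qed.

Definition Ii (m : nat) (s0 : R) (phi : R -> R) (th : R) : R :=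
  RInt (fun s => phi s / sqrt (th - s ^ m)) 0 s0.

Lemma T_pos m s0 th s : 0 <= s <= s0 -> s0 ^ m < th -> 0 < th - s ^ m.
Proof. intros Hs Hth. pose proof (pow_incr s s0 m Hs). lra. Qed.

Lemma minmax s0 : 0 < s0 -> Rmin 0 s0 = 0 /\ Rmax 0 s0 = s0.
Proof. intro; split; [apply Rmin_left|apply Rmax_right]; lra. Qed.

Lemma Ii_ex m s0 phi th : smooth phi -> 0 < s0 -> s0 ^ m < th ->
  ex_RInt (fun s => phi s / sqrt (th - s ^ m)) 0 s0.
Proof.
  intros Hp Hs0 Hth. apply exRInt_cont. destruct (minmax s0 Hs0) as [E1 E2].
  rewrite E1, E2. intros z Hz. apply exd_cont.
  pose proof (T_pos m s0 th z Hz Hth).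
  auto_derive. repeat split; try lra. apply smooth_ex_derive; auto.
  apply Rgt_not_eq, sqrt_lt_R0; lra.
Qed.

Definition dpar (m : nat) (phi : R -> R) (u t : R) : R :=
  - / 2 * phi t / (sqrt (u - t ^ m) * (u - t ^ m)).

Lemma Derive_par m phi u t : 0 < u - t ^ m ->
  Derive (fun z => phi t / sqrt (z - t ^ m)) u = dpar m phi u t.
Proof.
  intro H. apply is_derive_unique. unfold dpar.
  pose proof (sqrt_lt_R0 _ H) as Hs. pose proof (sqrt_sqrt _ (Rlt_le _ _ H)) as Hss.
  auto_derive; replace (u + - t ^ m) with (u - t ^ m) by ring.
  repeat split; lra.
  rewrite Hss. field. split; lra.
Qed.

Lemma cont2d_pow_pos m th t : 0 < th - t ^ m ->
  locally_2d (fun u v => 0 < u - v ^ m) th t.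
Proof.
  intro H.
  assert (C : continuity_2d_pt (fun u v => u - v ^ m) th t).
  { apply continuity_2d_pt_minus. apply continuity_2d_pt_id1.
    apply (continuity_1d_2d_pt_comp (fun x => x ^ m) (fun u v => v)).
    apply exd_cpt. auto_derive. auto. apply continuity_2d_pt_id2. }
  destruct (C (mkposreal _ H)) as [d Hd]. exists d. intros u v Hu Hv.
  specialize (Hd u v Hu Hv). simpl in Hd. apply Rabs_def2 in Hd. lra.
Qed.

Lemma dpar_cont m phi th t : smooth phi -> 0 < th - t ^ m ->
  continuity_2d_pt (fun u v => Derive (fun z => phi v / sqrt (z - v ^ m)) u) th t.
Proof.
  intros Hp H.
  apply continuity_2d_pt_ext_loc with (dpar m phi).
  { destruct (cont2d_pow_pos m th t H) as [d Hd]. exists d. intros u v Hu Hv.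
    symmetry. apply Derive_par. auto. }
  assert (CT : continuity_2d_pt (fun u v => u - v ^ m) th t).
  { apply continuity_2d_pt_minus. apply continuity_2d_pt_id1.
    apply (continuity_1d_2d_pt_comp (fun x => x ^ m) (fun u v => v)).
    apply exd_cpt. auto_derive. auto. apply continuity_2d_pt_id2. }
  unfold dpar. unfold Rdiv.
  apply continuity_2d_pt_mult.
  apply continuity_2d_pt_mult. apply continuity_2d_pt_const.
  apply (continuity_1d_2d_pt_comp phi (fun u v => v)).
  apply exd_cpt. apply smooth_ex_derive; auto. apply continuity_2d_pt_id2.
  apply continuity_2d_pt_inv.
  apply continuity_2d_pt_mult.
  apply (continuity_1d_2d_pt_comp sqrt (fun u v => u - v ^ m)).
  apply continuity_pt_sqrt. lra. auto. auto.
  pose proof (sqrt_lt_R0 _ H). nra.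
Qed.

Lemma Ii_deriv m s0 phi th : smooth phi -> 0 < s0 -> s0 ^ m < th ->
  is_derive (Ii m s0 phi) th (RInt (dpar m phi th) 0 s0).
Proof.
  intros Hp Hs0 Hth. destruct (minmax s0 Hs0) as [E1 E2].
  assert (Hd : is_derive (fun x => RInt (fun t => (fun u t => phi t / sqrt (u - t ^ m)) x t) 0 s0) th
     (RInt (fun t => Derive (fun u => (fun u t => phi t / sqrt (u - t ^ m)) u t) th) 0 s0)).
  { apply is_derive_RInt_param.
    - set (e := (th - s0 ^ m) / 2). assert (He : 0 < e) by (unfold e; lra).
      exists (mkposreal e He). intros x Hx t Ht. rewrite E1, E2 in Ht.
      change (Rabs (x - th) < e) in Hx. apply Rabs_def2 in Hx.
      assert (0 < x - t ^ m) by (apply (T_pos m s0); auto; unfold e in Hx; lra).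
      auto_derive. repeat split; try lra. apply Rgt_not_eq, sqrt_lt_R0; lra.
    - intros t Ht. rewrite E1, E2 in Ht. apply dpar_cont; auto. apply (T_pos m s0); auto.
    - set (e := (th - s0 ^ m) / 2). assert (He : 0 < e) by (unfold e; lra).
      exists (mkposreal e He). intros x Hx.
      change (Rabs (x - th) < e) in Hx. apply Rabs_def2 in Hx.
      apply Ii_ex; auto. unfold e in Hx; lra. }
  unfold Ii. replace (RInt (dpar m phi th) 0 s0) with
    (RInt (fun t => Derive (fun u => (fun u t => phi t / sqrt (u - t ^ m)) u t) th) 0 s0); auto.
  apply RInt_ext. rewrite E1, E2. intros x Hx. apply Derive_par. apply (T_pos m s0); auto; lra.
Qed.
Lemma dF_der m (phi:R->R) u th : 0 < th - u ^ (S m) -> ex_derive phi u -> is_derive (fun s => s * phi s / sqrt (th - s ^ (S m))) u 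
 ((phi u + u * Derive phi u) / sqrt (th - u ^ S m) + INR (S m) / 2 * u ^ S m * phi u / (sqrt (th - u ^ S m) * (th - u ^ S m))).
Proof.
intros H Hd. change (u ^ S m) with (u * u ^ m) in *. pose proof (sqrt_lt_R0 _ H) as Hs. pose proof (sqrt_sqrt _ (Rlt_le _ _ H)) as Hss.
  auto_derive; replace (th + - (u * u ^ m)) with (th - (u * u ^ m)) by ring.
  repeat split; auto; lra.
  replace (match m with 0%nat => 1 | S _ => INR m + 1 end) with (INR (S m)) by (rewrite S_INR; destruct m; simpl; ring).
  rewrite Hss. change (Derive (fun x : R => phi x) u) with (Derive phi u). field. lra.
Qed.

Lemma RI_scal (f : R -> R) a b k l : is_RInt f a b l -> is_RInt (fun x => k * f x) a b (k * l).
Proof. intro H. apply (@is_RInt_scal R_NormedModule f a b k l H). Qed.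
Lemma RI_plus (f g : R -> R) a b l1 l2 : is_RInt f a b l1 -> is_RInt g a b l2 ->
  is_RInt (fun x => f x + g x) a b (l1 + l2).
Proof. intros H1 H2. apply (@is_RInt_plus R_NormedModule f g a b l1 l2 H1 H2). Qed.
Lemma RI_minus (f g : R -> R) a b l1 l2 : is_RInt f a b l1 -> is_RInt g a b l2 ->
  is_RInt (fun x => f x - g x) a b (l1 - l2).
Proof. intros H1 H2. apply (@is_RInt_minus R_NormedModule f g a b l1 l2 H1 H2). Qed.
Lemma RI_correct (f : R -> R) a b : ex_RInt f a b -> is_RInt f a b (RInt f a b).
Proof. apply (@RInt_correct R_CompleteNormedModule). Qed.
Lemma RI_unique (f : R -> R) a b l : is_RInt f a b l -> RInt f a b = l.
Proof. apply (@is_RInt_unique R_CompleteNormedModule). Qed.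
Lemma RI_ext (f g : R -> R) a b l : (forall x, Rmin a b < x < Rmax a b -> f x = g x) ->
  is_RInt f a b l -> is_RInt g a b l.
Proof. apply (@is_RInt_ext R_NormedModule). Qed.

Lemma Ii_ibp m s0 phi th : (1 <= m)%nat -> smooth phi -> 0 < s0 -> s0 ^ m < th ->
  INR m * th * RInt (dpar m phi th) 0 s0 =
  (1 - INR m / 2) * Ii m s0 phi th + Ii m s0 (fun s => s * Derive phi s) th
  - s0 * phi s0 / sqrt (th - s0 ^ m).
Proof.
  intros Hm Hp Hs0 Hth. destruct (minmax s0 Hs0) as [E1 E2].
  destruct m as [|m']. lia.
  set (F := fun s => s * phi s / sqrt (th - s ^ (S m'))).
  set (dF := fun u => (phi u + u * Derive phi u) / sqrt (th - u ^ S m') + INR (S m') / 2 * u ^ S m' * phi u / (sqrt (th - u ^ S m') * (th - u ^ S m'))).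
  assert (HF : is_RInt dF 0 s0 (F s0 - F 0)).
  { apply (@is_RInt_derive R_CompleteNormedModule F dF); rewrite E1, E2; intros x Hx.
    - apply dF_der. apply (T_pos _ s0); auto. apply smooth_ex_derive; auto.
    - apply exd_cont. unfold dF. pose proof (T_pos (S m') s0 th x Hx Hth).
      pose proof (sqrt_lt_R0 _ H).
      change (x ^ S m') with (x * x ^ m') in *.
      auto_derive; replace (th + - (x * x ^ m')) with (th - (x * x ^ m')) by ring.
      repeat split; try lra; try (apply smooth_ex_derive; auto; fail).
      apply smooth_ex_derive. apply (smooth_Derive phi Hp).
      apply Rgt_not_eq. apply Rmult_lt_0_compat; lra. }
  assert (HA := RI_correct _ _ _ (Ii_ex (S m') s0 phi th Hp Hs0 Hth)).
  assert (HB := RI_correct _ _ _ (Ii_ex (S m') s0 (fun s => s * Derive phi s) th (smooth_mulid _ (smooth_Derive _ Hp)) Hs0 Hth)).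
  assert (HD : ex_RInt (dpar (S m') phi th) 0 s0).
  { apply exRInt_cont. rewrite E1, E2. intros z Hz. apply exd_cont. unfold dpar.
    pose proof (T_pos (S m') s0 th z Hz Hth). pose proof (sqrt_lt_R0 _ H).
    change (z ^ S m') with (z * z ^ m') in *.
    auto_derive; replace (th + - (z * z ^ m')) with (th - (z * z ^ m')) by ring.
    repeat split; try lra; try (apply smooth_ex_derive; auto; fail).
    apply Rgt_not_eq. apply Rmult_lt_0_compat; lra. }
  assert (H1 := RI_scal _ _ _ (INR (S m') * th) _ (RI_correct _ _ _ HD)).
  assert (H2 := RI_minus _ _ _ _ _ _ (RI_plus _ _ _ _ _ _ (RI_scal _ _ _ (1 - INR (S m') / 2) _ HA) HB) HF).
  unfold Ii. rewrite <- (RI_unique _ _ _ _ H1).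
  assert (F0 : F 0 = 0) by (unfold F, Rdiv; rewrite !Rmult_0_l; reflexivity).
  replace (s0 * phi s0 / sqrt (th - s0 ^ S m')) with (F s0 - F 0) by (rewrite F0; unfold F; ring).
  apply RI_unique.
  apply RI_ext with (2 := H2). rewrite E1, E2. intros x Hx.
  assert (HT : 0 < th - x ^ S m') by (apply (T_pos _ s0); auto; lra).
  pose proof (sqrt_lt_R0 _ HT). unfold dF, dpar.
  field. lra.
Qed.

Lemma Ii_step m s0 phi th b : (1 <= m)%nat -> smooth phi -> 0 < s0 -> s0 ^ m < th ->
  INR m * Derive (fun t => Rpower t b * Ii m s0 phi t) th =
  Rpower th (b - 1) * ((INR m * b + 1 - INR m / 2) * Ii m s0 phi th
     + Ii m s0 (fun s => s * Derive phi s) th - s0 * phi s0 / sqrt (th - s0 ^ m)).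
Proof.
  intros Hm Hp Hs0 Hth.
  assert (Hth0 : 0 < th) by (pose proof (pow_lt s0 m Hs0); lra).
  assert (HR : is_derive (fun t => Rpower t b) th (b * Rpower th (b - 1))).
  { apply is_derive_Reals. apply derivable_pt_lim_power; auto. }
  assert (HI := Ii_deriv m s0 phi th Hp Hs0 Hth).
  assert (HP := is_derive_mult _ _ _ _ _ HR HI (fun x y => Rmult_comm x y)).
  assert (D : Derive (fun t => Rpower t b * Ii m s0 phi t) th = b * Rpower th (b-1) * Ii m s0 phi th + Rpower th b * RInt (dpar m phi th) 0 s0) by (apply is_derive_unique; exact HP).
  rewrite D.
  replace (Rpower th b) with (Rpower th (b - 1) * th).
  2:{ replace b with ((b - 1) + 1) at 2 by ring. rewrite Rpower_plus, Rpower_1; auto. }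
  pose proof (Ii_ibp m s0 phi th Hm Hp Hs0 Hth) as E.
  replace (INR m * (b * Rpower th (b - 1) * Ii m s0 phi th +
      Rpower th (b - 1) * th * RInt (dpar m phi th) 0 s0))
   with (Rpower th (b - 1) * (INR m * b * Ii m s0 phi th + INR m * th * RInt (dpar m phi th) 0 s0)) by ring.
  rewrite E. ring.
Qed.

Fixpoint phis (phi : R -> R) (k : nat) : R -> R :=
  match k with
  | O => phi
  | S k => fun s => s * Derive (phis phi k) s - INR k * phis phi k s
  end.

Lemma smooth_phis phi k : smooth phi -> smooth (phis phi k).
Proof.
  intro Hp. induction k; simpl; auto.
  apply smooth_minus. apply smooth_mulid. apply smooth_Derive; auto.
  apply smooth_scal; auto.
Qed.

Lemma Ii_lin m s0 psi k th : smooth psi -> 0 < s0 -> s0 ^ m < th ->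
  Ii m s0 (fun s => s * Derive psi s - INR k * psi s) th =
  Ii m s0 (fun s => s * Derive psi s) th - INR k * Ii m s0 psi th.
Proof.
  intros Hp Hs0 Hth. unfold Ii. apply RI_unique.
  assert (HA := RI_correct _ _ _ (Ii_ex m s0 psi th Hp Hs0 Hth)).
  assert (HB := RI_correct _ _ _ (Ii_ex m s0 (fun s => s * Derive psi s) th (smooth_mulid _ (smooth_Derive _ Hp)) Hs0 Hth)).
  assert (H := RI_minus _ _ _ _ _ _ HB (RI_scal _ _ _ (INR k) _ HA)).
  apply RI_ext with (2 := H). intros x Hx. simpl. unfold Rdiv. ring.
Qed.

Lemma Dop_step m s0 phi k (g : R -> R) K e al th :
  (1 <= m)%nat -> smooth phi -> 0 < s0 -> s0 ^ m < th ->
  (forall t, s0 ^ m < t -> g t = K * Rpower t e * Ii m s0 (phis phi k) t) ->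
  e + al = 1/2 - INR (S k) / INR m ->
  D_op m al g th = K * Rpower th (-1/2 - INR (S k) / INR m) *
     (Ii m s0 (phis phi (S k)) th - s0 * phis phi k s0 / sqrt (th - s0 ^ m)).
Proof.
  intros Hm Hp Hs0 Hth Hg He.
  assert (HmR : 0 < INR m) by (apply lt_0_INR; lia).
  unfold D_op.
  rewrite (Derive_ext_loc _ (fun t => K * (Rpower t (1/2 - INR (S k) / INR m) * Ii m s0 (phis phi k) t))).
  2:{ apply (loc_ball th (th - s0 ^ m)). lra. intros y Hy. apply Rabs_def2 in Hy.
      rewrite Hg by lra. rewrite <- He, Rpower_plus. ring. }
  rewrite Derive_scal.
  replace (INR m * (K * Derive (fun t => Rpower t (1/2 - INR (S k) / INR m) * Ii m s0 (phis phi k) t) th))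
    with (K * (INR m * Derive (fun t => Rpower t (1/2 - INR (S k) / INR m) * Ii m s0 (phis phi k) t) th)) by ring.
  rewrite Ii_step; auto. 2: apply smooth_phis; auto.
  change (phis phi (S k)) with (fun s => s * Derive (phis phi k) s - INR k * phis phi k s). rewrite Ii_lin; auto. 2: apply smooth_phis; auto.
  replace (1/2 - INR (S k) / INR m - 1) with (-1/2 - INR (S k) / INR m) by lra.
  replace (INR m * (1 / 2 - INR (S k) / INR m) + 1 - INR m / 2) with (- INR k).
  ring. rewrite S_INR. field. lra.
Qed.

Lemma Dn_formula m s0 phi (f : R -> R) K :
  (1 <= m)%nat -> smooth phi -> 0 < s0 ->
  (forall t, s0 ^ m < t -> f t = K * Ii m s0 phi t) ->
  forall n, (1 <= n)%nat -> (forall j, (j + 2 <= n)%nat -> phis phi j s0 = 0) ->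
  forall th, s0 ^ m < th ->
  Dn m n f th = K * Rpower th (-1/2 - INR n / INR m) *
     (Ii m s0 (phis phi n) th - s0 * phis phi (pred n) s0 / sqrt (th - s0 ^ m)).
Proof.
  intros Hm Hp Hs0 Hf n. induction n as [|n IH]; intros Hn Hj th Hth. lia.
  destruct n as [|n].
  - simpl Dn. apply (Dop_step m s0 phi 0 f K 0); auto.
    intros t Ht. rewrite Rpower_O. rewrite Hf; auto. simpl; ring.
    pose proof (pow_lt s0 m Hs0); lra.
    simpl INR. lra.
  - change (Dn m (S (S n)) f) with (D_op m (1 - 1 / INR m) (Dn m (S n) f)).
    apply (Dop_step m s0 phi (S n) _ K (-1/2 - INR (S n) / INR m)); auto.
    + intros t Ht. rewrite IH; [| lia | intros; apply Hj; lia | lra].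
      simpl pred. rewrite (Hj n) by lia. rewrite Rmult_0_r. unfold Rdiv at 3. rewrite Rmult_0_l, Rminus_0_r. reflexivity.
    + rewrite !S_INR. lra.
Qed.

Lemma Dn_mulid_all g : smooth g -> forall l s,
  Derive_n (fun y => y * g y) l s = s * Derive_n g l s + INR l * Derive_n g (pred l) s.
Proof.
  intros Hg [|l] s. simpl. ring. rewrite Dn_mulid; auto.
Qed.

Lemma phis_vals phi : smooth phi -> forall j l s,
  (forall i, (i < j + l)%nat -> Derive_n phi i s = 0) ->
  Derive_n (phis phi j) l s = s ^ j * Derive_n phi (j + l) s.
Proof.
  intros Hp j. induction j as [|j IH]; intros l s Hi.
  - simpl. ring.
  - assert (Sj := smooth_phis phi j Hp).
    change (phis phi (S j)) with (fun s => s * Derive (phis phi j) s - INR j * phis phi j s).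
    rewrite Dn_minus. 2: apply smooth_mulid, smooth_Derive; auto. 2: apply smooth_scal; auto.
    rewrite Derive_n_scal_l. rewrite Dn_mulid_all. 2: apply smooth_Derive; auto.
    rewrite !Derive_n_Derive.
    assert (H1 : Derive_n (phis phi j) (S l) s = s ^ j * Derive_n phi (j + S l) s)
      by (apply IH; intros; apply Hi; lia).
    assert (H0 : Derive_n (phis phi j) l s = 0).
    { rewrite IH. rewrite (Hi (j + l)%nat) by lia. ring. intros; apply Hi; lia. }
    rewrite H1, H0. destruct l as [|l]; simpl pred.
    + replace (S j + 0)%nat with (j + 1)%nat by lia. simpl INR. simpl pow. ring.
    + rewrite H0. replace (S j + S l)%nat with (j + S (S l))%nat by lia. simpl pow. ring.
Qed.

Lemma cont_cpt (f : R -> R) x : continuous f x -> continuity_pt f x.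
Proof. intro H. apply continuity_pt_filterlim. exact H. Qed.
Lemma cpt_cont (f : R -> R) x : continuity_pt f x -> continuous f x.
Proof. intro H. apply continuity_pt_filterlim. exact H. Qed.

Lemma cont_abs (f : R -> R) x : continuous f x -> continuous (fun y => Rabs (f y)) x.
Proof.
  intro H. apply cpt_cont. apply (continuity_pt_comp f Rabs). apply cont_cpt; auto.
  apply Rcontinuity_abs.
Qed.

Lemma bound_compact (f : R -> R) a b : a <= b -> (forall x, continuous f x) ->
  exists A, 0 <= A /\ forall x, a <= x <= b -> Rabs (f x) <= A.
Proof.
  intros Hab Hc. destruct (continuity_ab_maj (fun y => Rabs (f y)) a b Hab) as [Mx [HM _]].
  intros c _. apply cont_cpt. apply cont_abs; auto.
  exists (Rabs (f Mx)). split. apply Rabs_pos. auto.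
Qed.

Lemma sqrt_integral A k e s0 : 0 < k -> 0 < e -> 0 < s0 ->
  is_RInt (fun s => A / sqrt (e + k * (s0 - s))) 0 s0
   ((- (2 * A / k) * sqrt e) - (- (2 * A / k) * sqrt (e + k * s0))).
Proof.
  intros Hk He Hs0.
  set (G := fun s => - (2 * A / k) * sqrt (e + k * (s0 - s))).
  replace ((- (2 * A / k) * sqrt e) - (- (2 * A / k) * sqrt (e + k * s0))) with (G s0 - G 0).
  2:{ unfold G. replace (e + k * (s0 - s0)) with e by ring. replace (e + k * (s0 - 0)) with (e + k * s0) by ring. ring. }
  destruct (minmax s0 Hs0) as [E1 E2].
  apply (@is_RInt_derive R_CompleteNormedModule G); rewrite E1, E2; intros x Hx.
  - unfold G. assert (0 < e + k * (s0 - x)) by nra. pose proof (sqrt_lt_R0 _ H).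
    auto_derive. lra. replace (s0 + - x) with (s0 - x) by ring. field. lra.
  - apply exd_cont. assert (0 < e + k * (s0 - x)) by nra. pose proof (sqrt_lt_R0 _ H).
    auto_derive. replace (s0 + - x) with (s0 - x) by ring. repeat split; lra.
Qed.

Lemma Ii_bound m s0 psi : (1 <= m)%nat -> smooth psi -> 0 < s0 ->
  exists M, forall th, s0 ^ m < th <= s0 ^ m + 1 -> Rabs (Ii m s0 psi th) <= M.
Proof.
  intros Hm Hp Hs0. destruct m as [|m']. lia.
  destruct (bound_compact psi 0 s0) as [A [HA0 HA]]. lra. apply smooth_cont0; auto.
  set (k := s0 ^ m'). assert (Hk : 0 < k) by (apply pow_lt; auto).
  exists (2 * A / k * sqrt (1 + k * s0)).
  intros th Hth. set (e := th - s0 ^ S m'). assert (He : 0 < e) by (unfold e; lra).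
  destruct (minmax s0 Hs0) as [E1 E2].
  assert (Key : forall s, 0 <= s <= s0 -> e + k * (s0 - s) <= th - s ^ S m').
  { intros s Hs. unfold e, k. simpl. pose proof (pow_incr s s0 m' Hs). nra. }
  assert (Hex := Ii_ex (S m') s0 psi th Hp Hs0 (proj1 Hth)).
  unfold Ii. eapply Rle_trans. apply abs_RInt_le. lra. exact Hex.
  eapply Rle_trans. apply RInt_le with (g := fun s => A / sqrt (e + k * (s0 - s))). lra.
  - apply exRInt_cont. rewrite E1, E2. intros z Hz. apply cont_abs.
    apply exd_cont. pose proof (T_pos (S m') s0 th z Hz (proj1 Hth)).
    change (z ^ S m') with (z * z ^ m') in *.
    auto_derive; replace (th + - (z * z ^ m')) with (th - z * z ^ m') by ring.
    repeat split; try lra. apply smooth_ex_derive; auto.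
    apply Rgt_not_eq, sqrt_lt_R0; lra.
  - eexists. apply sqrt_integral; auto.
  - intros x Hx. assert (Hx' : 0 <= x <= s0) by lra.
    pose proof (Key x Hx'). assert (0 < e + k * (s0 - x)) by nra.
    pose proof (sqrt_lt_R0 _ H0).
    assert (sqrt (e + k * (s0 - x)) <= sqrt (th - x ^ S m')) by (apply sqrt_le_1; lra).
    unfold Rdiv. rewrite Rabs_mult. rewrite (Rabs_pos_eq (/ _)).
    2:{ apply Rlt_le, Rinv_0_lt_compat, sqrt_lt_R0. lra. }
    apply Rmult_le_compat. apply Rabs_pos. apply Rlt_le, Rinv_0_lt_compat, sqrt_lt_R0. lra.
    apply HA; auto. apply Rinv_le_contravar; auto.
  - rewrite (RI_unique _ _ _ _ (sqrt_integral A k e s0 Hk He Hs0)).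
    assert (sqrt (e + k * s0) <= sqrt (1 + k * s0)) by (apply sqrt_le_1; unfold e in *; nra).
    pose proof (sqrt_pos e).
    assert (0 <= 2 * A / k) by (apply Rmult_le_pos; [lra | apply Rlt_le, Rinv_0_lt_compat; auto]).
    nra.
Qed.

Lemma Rpower_lower c p th : 0 < c -> p < 0 -> c < th <= c + 1 -> Rpower (c + 1) p <= Rpower th p.
Proof.
  intros Hc Hp Hth. unfold Rpower.
  assert (ln th <= ln (c + 1)) by (apply ln_le; lra).
  assert (p * ln (c + 1) <= p * ln th) by nra.
  destruct (Rle_lt_or_eq_dec _ _ H0) as [Hl|He]. left; apply exp_increasing; auto.
  rewrite He; lra.
Qed.

Lemma sqrt_small (B X y c : R) : 0 < B -> 0 < X -> c < y -> y - c < (B / X) ^ 2 -> X < B / sqrt (y - c).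
Proof.
  intros HB HX Hy Hd.
  assert (Hs : sqrt (y - c) < B / X).
  { assert (E : sqrt ((B / X) ^ 2) = B / X) by (apply sqrt_pow2; apply Rlt_le, Rdiv_lt_0_compat; auto).
    rewrite <- E. apply sqrt_lt_1; [lra | apply pow2_ge_0 | auto]. }
  pose proof (sqrt_lt_R0 (y - c) ltac:(lra)).
  apply Rmult_lt_reg_r with (sqrt (y - c)); auto.
  unfold Rdiv. rewrite Rmult_assoc, Rinv_l by lra. rewrite Rmult_1_r.
  apply Rmult_lt_reg_r with (/ X). apply Rinv_0_lt_compat; auto.
  replace (X * sqrt (y - c) * / X) with (sqrt (y - c)) by (field; lra). exact Hs.
Qed.

Lemma lim_final (Gf Ifn : R -> R) c K p B Mi :
  0 < c -> 0 < K -> p < 0 ->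
  (forall th, c < th <= c + 1 -> Rabs (Ifn th) <= Mi) ->
  (forall th, c < th -> Gf th = K * Rpower th p * (Ifn th - B / sqrt (th - c))) ->
  (B < 0 -> filterlim Gf (at_right c) (Rbar_locally p_infty)) /\
  (B > 0 -> filterlim Gf (at_right c) (Rbar_locally m_infty)).
Proof.
  intros Hc HK Hp HI HG.
  set (L := Rpower (c + 1) p). assert (HL : 0 < L) by (unfold L, Rpower; apply exp_pos).
  set (Mi' := Rabs Mi + 1).
  assert (HMi : forall th, c < th <= c + 1 -> Rabs (Ifn th) <= Mi').
  { intros th Hth. pose proof (HI th Hth). unfold Mi'. pose proof (Rle_abs Mi). lra. }
  assert (HMi0 : 0 < Mi') by (unfold Mi'; pose proof (Rabs_pos Mi); lra).
  split; intros HB P [M HM].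
  - set (X := (Rabs M + 1) / (K * L)).
    assert (HX : 0 < X) by (unfold X; apply Rdiv_lt_0_compat; [pose proof (Rabs_pos M); lra| nra]).
    set (d := Rmin 1 ((- B / (Mi' + X)) ^ 2)).
    assert (Hd : 0 < d).
    { unfold d. apply Rmin_pos. lra. apply pow_lt. apply Rdiv_lt_0_compat; lra. }
    exists (mkposreal d Hd). intros y Hy Hcy. change (Rabs (y - c) < d) in Hy.
    apply Rabs_def2 in Hy. apply HM.
    assert (Hy1 : y - c < 1) by (pose proof (Rmin_l 1 ((- B / (Mi' + X)) ^ 2)); fold d in H; lra).
    assert (Hy2 : y - c < (- B / (Mi' + X)) ^ 2) by (pose proof (Rmin_r 1 ((- B / (Mi' + X)) ^ 2)); fold d in H; lra).
    assert (Q := sqrt_small (- B) (Mi' + X) y c ltac:(lra) ltac:(lra) Hcy Hy2).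
    assert (Hb : B / sqrt (y - c) = - (- B / sqrt (y - c))) by (unfold Rdiv; ring).
    assert (HIy : - Mi' <= Ifn y <= Mi') by (pose proof (HMi y ltac:(lra)); pose proof (Rle_abs (Ifn y)); pose proof (Rle_abs (- Ifn y)); rewrite Rabs_Ropp in *; lra).
    assert (Hin : X < Ifn y - B / sqrt (y - c)) by lra.
    assert (HRL := Rpower_lower c p y Hc Hp ltac:(lra)). fold L in HRL.
    rewrite HG by lra.
    assert (HKX : K * L * X = Rabs M + 1) by (unfold X; field; nra).
    pose proof (Rle_abs M).
    assert (K * L * X < K * Rpower y p * (Ifn y - B / sqrt (y - c))).
    { apply Rlt_le_trans with (K * L * (Ifn y - B / sqrt (y - c))).
      apply Rmult_lt_compat_l; nra.
      apply Rmult_le_compat_r. lra. apply Rmult_le_compat_l; lra. }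
    lra.
  - set (X := (Rabs M + 1) / (K * L)).
    assert (HX : 0 < X) by (unfold X; apply Rdiv_lt_0_compat; [pose proof (Rabs_pos M); lra| nra]).
    set (d := Rmin 1 ((B / (Mi' + X)) ^ 2)).
    assert (Hd : 0 < d).
    { unfold d. apply Rmin_pos. lra. apply pow_lt. apply Rdiv_lt_0_compat; lra. }
    exists (mkposreal d Hd). intros y Hy Hcy. change (Rabs (y - c) < d) in Hy.
    apply Rabs_def2 in Hy. apply HM.
    assert (Hy1 : y - c < 1) by (pose proof (Rmin_l 1 ((B / (Mi' + X)) ^ 2)); fold d in H; lra).
    assert (Hy2 : y - c < (B / (Mi' + X)) ^ 2) by (pose proof (Rmin_r 1 ((B / (Mi' + X)) ^ 2)); fold d in H; lra).
    assert (Q := sqrt_small B (Mi' + X) y c ltac:(lra) ltac:(lra) Hcy Hy2).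
    assert (HIy : - Mi' <= Ifn y <= Mi') by (pose proof (HMi y ltac:(lra)); pose proof (Rle_abs (Ifn y)); pose proof (Rle_abs (- Ifn y)); rewrite Rabs_Ropp in *; lra).
    assert (Hin : Ifn y - B / sqrt (y - c) < - X) by lra.
    assert (HRL := Rpower_lower c p y Hc Hp ltac:(lra)). fold L in HRL.
    rewrite HG by lra.
    assert (HKX : K * L * X = Rabs M + 1) by (unfold X; field; nra).
    pose proof (Rle_abs M) as HM1. pose proof (Rle_abs (- M)) as HM2. rewrite Rabs_Ropp in HM2.
    assert (K * Rpower y p * (Ifn y - B / sqrt (y - c)) < - (K * L * X)).
    { apply Rle_lt_trans with (K * L * (Ifn y - B / sqrt (y - c))).
      replace (K * Rpower y p * (Ifn y - B / sqrt (y - c))) with (- (K * Rpower y p * (- (Ifn y - B / sqrt (y - c))))) by ring.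
      replace (K * L * (Ifn y - B / sqrt (y - c))) with (- (K * L * (- (Ifn y - B / sqrt (y - c))))) by ring.
      apply Ropp_le_contravar. apply Rmult_le_compat_r. lra. apply Rmult_le_compat_l; lra.
      replace (K * L * (Ifn y - B / sqrt (y - c))) with (- (K * L * (- (Ifn y - B / sqrt (y - c))))) by ring.
      apply Ropp_lt_contravar. apply Rmult_lt_compat_l; nra. }
    lra.
Qed.

Lemma cov m s0 b (U Vv : R -> R) th : smooth U -> smooth Vv -> 0 < s0 -> s0 ^ m < th ->
  U 0 = 0 -> U s0 = b -> (forall s, 0 <= s <= s0 -> Vv (U s) = s ^ m) ->
  RInt (fun y => / (sqrt 2 * sqrt (th - Vv y))) 0 b =
  RInt (fun s => Derive U s * / (sqrt 2 * sqrt (th - s ^ m))) 0 s0.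
Proof.
  intros HU HV Hs0 Hth U0 Ub HVU. destruct (minmax s0 Hs0) as [E1 E2].
  rewrite <- U0 at 1. rewrite <- Ub.
  rewrite <- (@RInt_comp R_CompleteNormedModule (fun y => / (sqrt 2 * sqrt (th - Vv y))) U (Derive U) 0 s0).
  - apply RInt_ext. rewrite E1, E2. intros x Hx. rewrite HVU by lra. reflexivity.
  - rewrite E1, E2. intros x Hx. apply exd_cont.
    pose proof (T_pos m s0 th x Hx Hth). rewrite <- (HVU x Hx) in H.
    assert (0 < sqrt 2) by (apply sqrt_lt_R0; lra).
    auto_derive. repeat split; try lra. apply smooth_ex_derive; auto.
    apply Rgt_not_eq. apply Rmult_lt_0_compat; auto. apply sqrt_lt_R0; lra.
  - rewrite E1, E2. intros x Hx. split.
    apply Derive_correct. apply smooth_ex_derive; auto.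
    apply exd_cont. apply (smooth_Derive U HU 0%nat).
Qed.

Lemma smooth_Wbar W : smooth W -> smooth (Wbar W).
Proof.
  intro H. apply smooth_ext with (fun x => (-1) * W (- x)). intro; unfold Wbar; ring.
  apply smooth_scal, smooth_opp_comp; auto.
Qed.

Lemma setup V m Vs W xi xibar : UM V -> is_deg0 V m -> is_Vstar V m Vs W ->
  0 < xi -> 0 < xibar -> Vbar V xibar = V xi ->
  (1 <= m)%nat /\ 0 < Vs xi /\ W (Vs xi) = xi /\ W 0 = 0 /\ Wbar W 0 = 0 /\
  Wbar W (Vs xi) = xibar /\
  (forall s, V (W s) = s ^ m) /\ (forall s, Vbar V (Wbar W s) = s ^ m) /\
  smooth W /\ smooth (Wbar W) /\ smooth V /\ smooth (Vbar V) /\ (exists k, m = (2 * k)%nat).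
Proof.
  intros HUM Hdeg HVs Hxi Hxib Hbar.
  destruct (Vstar_facts V m Vs W HUM Hdeg HVs) as [Hm [Vs0 [W0 [[k Hk] [Hinc [SVs [SW SV]]]]]]].
  destruct HVs as [_ [_ [HWVs [HVsW [_ HVsm]]]]].
  assert (Hs0 : 0 < Vs xi) by (rewrite <- Vs0; apply Hinc; auto).
  assert (VW : forall s, V (W s) = s ^ m) by (intro s; rewrite <- HVsm, HVsW; auto).
  assert (Wm : W (- Vs xi) = - xibar).
  { assert (Hn : Vs (- xibar) < 0) by (rewrite <- Vs0; apply Hinc; lra).
    assert (E : - Vs (- xibar) = Vs xi).
    { apply (pow_inj_pos _ _ m); try lra; auto.
      rewrite Hk, pow_even_opp, <- Hk, !HVsm. unfold Vbar in Hbar. auto. }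
    rewrite <- E, Ropp_involutive, HWVs; auto. }
  repeat split; auto.
  - unfold Wbar. rewrite Ropp_0, W0. ring.
  - unfold Wbar. rewrite Wm. ring.
  - intro s. unfold Vbar, Wbar. rewrite Ropp_involutive, VW, Hk, pow_even_opp. auto.
  - apply smooth_Wbar; auto.
  - apply smooth_opp_comp; auto.
  - exists k; auto.
Qed.

Lemma f_eq V m Vs W xi xibar gamma th : UM V -> is_deg0 V m -> is_Vstar V m Vs W ->
  0 < xi -> 0 < xibar -> Vbar V xibar = V xi -> Vs xi ^ m < th ->
  a_fun V xi th - gamma * a_fun (Vbar V) xibar th =
  / sqrt 2 * Ii m (Vs xi) (fun s => Derive W s - gamma * Derive (Wbar W) s) th.
Proof.
  intros HUM Hdeg HVs Hxi Hxib Hbar Hth.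
  destruct (setup V m Vs W xi xibar HUM Hdeg HVs Hxi Hxib Hbar)
    as [Hm [Hs0 [Ws0 [W0 [Wb0 [Wbs0 [VW [VbWb [SW [SWb [SV [SVb _]]]]]]]]]]]].
  set (s0 := Vs xi) in *.
  unfold a_fun.
  rewrite (cov m s0 xi W V th); auto.
  rewrite (cov m s0 xibar (Wbar W) (Vbar V) th); auto.
  destruct (minmax s0 Hs0) as [E1 E2].
  assert (ex1 : forall U, smooth U -> ex_RInt (fun s => Derive U s * / (sqrt 2 * sqrt (th - s ^ m))) 0 s0).
  { intros U HU. apply exRInt_cont. rewrite E1, E2. intros z Hz. apply exd_cont.
    pose proof (T_pos m s0 th z Hz Hth).
    assert (0 < sqrt 2) by (apply sqrt_lt_R0; lra).
    auto_derive. repeat split; try lra. apply (smooth_Derive U HU 0%nat).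
    apply Rgt_not_eq. apply Rmult_lt_0_compat; auto. apply sqrt_lt_R0; lra. }
  assert (Hphi : smooth (fun s => Derive W s - gamma * Derive (Wbar W) s)).
  { apply smooth_minus. apply smooth_Derive; auto. apply smooth_scal, smooth_Derive; auto. }
  assert (H := RI_minus _ _ _ _ _ _ (RI_correct _ _ _ (ex1 W SW)) (RI_scal _ _ _ gamma _ (RI_correct _ _ _ (ex1 _ SWb)))).
  assert (HI := RI_scal _ _ _ (/ sqrt 2) _ (RI_correct _ _ _ (Ii_ex m s0 _ th Hphi Hs0 Hth))).
  rewrite <- (RI_unique _ _ _ _ H). unfold Ii. rewrite <- (RI_unique _ _ _ _ HI).
  apply RInt_ext. rewrite E1, E2. intros x Hx.
  pose proof (T_pos m s0 th x (conj (Rlt_le _ _ (proj1 Hx)) (Rlt_le _ _ (proj2 Hx))) Hth).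
  assert (0 < sqrt 2) by (apply sqrt_lt_R0; lra). pose proof (sqrt_lt_R0 _ H0).
  match goal with |- ?a = ?b => change (@eq R a b) end. field. lra.
Qed.

Lemma ps_opp (a : nat -> R) u l : is_pseries a (- u) l -> is_pseries (fun k => (-1) ^ k * a k) u l.
Proof.
  intro H. unfold is_pseries in *. eapply is_series_ext; [|exact H].
  intro n. simpl. rewrite !pow_n_pow. unfold scal; simpl; unfold mult; simpl.
  match goal with |- ?a = ?b => change (@eq R a b) end.
  assert (P : forall k, @pow_n R_AbsRing u k = u ^ k) by (induction k; simpl; auto; rewrite IHk; reflexivity). rewrite P. replace (- u) with ((-1) * u) by ring. rewrite Rpow_mult_distr. ring.
Qed.

Lemma ra_opp f : real_analytic f -> real_analytic (fun x => f (- x)).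
Proof.
  intros H x0. destruct (H (- x0)) as [r [Hr [a Ha]]].
  exists r. split; auto. exists (fun k => (-1) ^ k * a k). intros x Hx.
  apply ps_opp. replace (- (x - x0)) with (- x - - x0) by ring. apply Ha.
  replace (- x - - x0) with (- (x - x0)) by ring. rewrite Rabs_Ropp; auto.
Qed.

Lemma ra_lin f g c : real_analytic f -> real_analytic g -> real_analytic (fun x => f x - c * g x).
Proof.
  intros Hf Hg x0. destruct (Hf x0) as [r1 [Hr1 [a Ha]]]. destruct (Hg x0) as [r2 [Hr2 [b Hb]]].
  exists (Rmin r1 r2). split. apply Rmin_pos; auto.
  exists (fun k => a k - c * b k). intros x Hx.
  assert (H1 := Ha x ltac:(pose proof (Rmin_l r1 r2); lra)).
  assert (H2 := Hb x ltac:(pose proof (Rmin_r r1 r2); lra)).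
  assert (H2' := @is_pseries_scal R_AbsRing R_NormedModule c b (x - x0) (g x) (Rmult_comm _ _) H2).
  assert (H3 := @is_pseries_minus R_AbsRing R_NormedModule _ _ _ _ _ H1 H2').
  unfold is_pseries in *. eapply is_series_ext; [|exact H3].
  intro n. unfold PS_minus, PS_scal, PS_plus, PS_opp. reflexivity.
Qed.

Lemma loc_const h x0 : real_analytic h -> (forall k, (1 <= k)%nat -> Derive_n h k x0 = 0) ->
  exists r, 0 < r /\ forall x, Rabs (x - x0) < r -> Derive h x = 0.
Proof.
  intros H Hk. destruct (H x0) as [r [Hr [a Ha]]].
  assert (Rad : forall y, Rabs y < r -> Rbar_lt (Rabs y) (CV_radius a)).
  { apply radius_ge with (F := fun y => h (y + x0)); auto.
    intros y Hy. replace y with (y + x0 - x0) at 1 by ring. apply Ha.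
    replace (y + x0 - x0) with y by ring; auto. }
  set (g := fun x => PSeries a (x + - x0)).
  assert (Eq : forall t, Rabs (t - x0) < r -> h t = g t).
  { intros t Ht. unfold g. symmetry. apply is_pseries_unique. apply Ha. auto. }
  assert (Loc : forall x, Rabs (x - x0) < r -> locally x (fun t => h t = g t)).
  { intros x Hx. apply (loc_ball x (r - Rabs (x - x0))). lra. intros y Hy. apply Eq.
    replace (y - x0) with ((y - x) + (x - x0)) by ring.
    pose proof (Rabs_triang (y - x) (x - x0)). lra. }
  assert (Ha0 : forall k, (1 <= k)%nat -> a k = 0).
  { intros k Hk1.
    assert (E : Derive_n h k x0 = a k * INR (Factorial.fact k)).
    { rewrite (Derive_n_ext_loc h g). unfold g. rewrite Derive_n_comp_trans.
      replace (x0 + - x0) with 0 by ring. apply Derive_n_coef.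
      replace 0 with (Rabs 0) by apply Rabs_R0. apply Rad. rewrite Rabs_R0; auto.
      apply Loc. replace (x0 - x0) with 0 by ring. rewrite Rabs_R0; auto. }
    rewrite Hk in E by auto. pose proof (INR_fact_neq_0 k).
    symmetry in E. apply Rmult_integral in E. destruct E; auto. contradiction. }
  exists r. split; auto. intros x Hx.
  rewrite (Derive_ext_loc h g) by (apply Loc; auto).
  change (Derive g x) with (Derive_n g 1 x). unfold g. rewrite Derive_n_comp_trans.
  simpl. rewrite Derive_PSeries. rewrite (PSeries_ext _ (fun _ => 0)). apply PSeries_const_0.
  intro n. unfold PS_derive. rewrite Ha0 by lia. ring.
  apply Rad. replace (x + - x0) with (x - x0) by ring. auto.
Qed.

Lemma connect_right (P : R -> Prop) a :
  (forall x, P x -> exists e, 0 < e /\ forall y, Rabs (y - x) < e -> P y) ->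
  (forall x, (forall e, 0 < e -> exists y, Rabs (y - x) < e /\ P y) -> P x) ->
  P a -> forall b, a <= b -> P b.
Proof.
  intros Ho Hc Pa b Hab.
  destruct (Classical_Prop.classic (P b)) as [Pb|nPb]; auto. exfalso.
  set (E := fun t => a <= t <= b /\ forall u, a <= u <= t -> P u).
  assert (Hb : bound E) by (exists b; intros t [Ht _]; lra).
  assert (He : exists t, E t) by (exists a; split; [lra| intros u Hu; replace u with a by lra; auto]).
  destruct (completeness E Hb He) as [T [HT1 HT2]].
  assert (HaT : a <= T) by (apply HT1; split; [lra| intros u Hu; replace u with a by lra; auto]).
  assert (HTb : T <= b) by (apply HT2; intros t [Ht _]; lra).
  assert (Below : forall u, a <= u < T -> P u).
  { intros u Hu. destruct (Classical_Prop.classic (exists t, E t /\ u <= t)) as [[t [[_ Ht] Hut]]|N].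
    apply Ht; lra. exfalso. assert (T <= u). apply HT2. intros t Et.
    destruct (Rle_lt_dec t u); auto. exfalso; apply N; exists t; split; auto; lra. lra. }
  assert (PT : P T).
  { apply Hc. intros e He0. destruct (Rle_lt_dec T a) as [HTa|HTa].
    - exists a. split; auto. rewrite Rabs_left1 by lra. lra.
    - exists (Rmax a (T - e / 2)). split.
      + unfold Rmax. destruct (Rle_dec a (T - e/2)); rewrite Rabs_left1 by lra; lra.
      + apply Below. split. apply Rmax_l. unfold Rmax. destruct (Rle_dec a (T - e/2)); lra. }
  assert (HTb' : T < b) by (destruct (Req_dec T b); [subst; contradiction | lra]).
  destruct (Ho T PT) as [e [He0 HPe]].
  set (t' := Rmin b (T + e / 2)).
  assert (Et' : E t').
  { split. unfold t', Rmin; destruct (Rle_dec b (T + e/2)); lra.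
    intros u Hu. destruct (Rlt_le_dec u T). apply Below; lra.
    apply HPe. unfold t', Rmin in Hu; destruct (Rle_dec b (T + e/2)); rewrite Rabs_pos_eq; lra. }
  pose proof (HT1 t' Et'). unfold t', Rmin in H; destruct (Rle_dec b (T + e/2)); lra.
Qed.

Lemma connect (P : R -> Prop) a :
  (forall x, P x -> exists e, 0 < e /\ forall y, Rabs (y - x) < e -> P y) ->
  (forall x, (forall e, 0 < e -> exists y, Rabs (y - x) < e /\ P y) -> P x) ->
  P a -> forall b, P b.
Proof.
  intros Ho Hc Pa b. destruct (Rle_lt_dec a b). apply (connect_right P a); auto.
  set (Q := fun x => P (- x)).
  assert (Qb : Q (- b)).
  { apply (connect_right Q (- a)).
    - intros x Qx. destruct (Ho (- x) Qx) as [e [He H]]. exists e. split; auto.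
      intros y Hy. apply H. replace (- y - - x) with (- (y - x)) by ring. rewrite Rabs_Ropp; auto.
    - intros x Hx. apply Hc. intros e He. destruct (Hx e He) as [y [Hy Qy]]. exists (- y).
      split; auto. replace (- y - - x) with (- (y - x)) by ring. rewrite Rabs_Ropp; auto.
    - unfold Q. rewrite Ropp_involutive; auto.
    - lra. }
  unfold Q in Qb. rewrite Ropp_involutive in Qb; auto.
Qed.

Lemma identity h s0 : real_analytic h -> smooth h ->
  (forall k, (1 <= k)%nat -> Derive_n h k s0 = 0) -> forall x, Derive h x = 0.
Proof.
  intros Ha Hs H0 x.
  set (P := fun x => forall k, (1 <= k)%nat -> Derive_n h k x = 0).
  assert (All : forall b, P b).
  { apply (connect P s0); auto.
    - intros y Py. destruct (loc_const h y Ha Py) as [r [Hr Hd]].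
      exists r. split; auto. intros z Hz k Hk. destruct k as [|k]. lia.
      rewrite <- Derive_n_Derive.
      rewrite (Derive_n_ext_loc (Derive h) (fun _ => 0)).
      destruct k; simpl; auto. apply Derive_n_const.
      apply (loc_ball z (r - Rabs (z - y))). lra. intros t Ht. apply Hd.
      replace (t - y) with ((t - z) + (z - y)) by ring.
      pose proof (Rabs_triang (t - z) (z - y)). lra.
    - intros y Hy k Hk. destruct (Req_dec (Derive_n h k y) 0) as [E|E]; auto. exfalso.
      assert (Hv : 0 < Rabs (Derive_n h k y)) by (apply Rabs_pos_lt; auto).
      assert (C := smooth_cont h Hs k y).
      destruct (proj1 (filterlim_locally _ _) C (mkposreal _ Hv)) as [d Hd].
      destruct (Hy d (cond_pos d)) as [z [Hz Pz]].
      specialize (Hd z Hz). rewrite (Pz k Hk) in Hd. change (Rabs (0 - Derive_n h k y) < Rabs (Derive_n h k y)) in Hd.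
      rewrite Rminus_0_l, Rabs_Ropp in Hd. lra. }
  apply (All x 1%nat). lia.
Qed.

Lemma exists_N V m Vs W xi xibar gamma : UM V -> is_deg0 V m -> is_Vstar V m Vs W ->
  0 < xi -> 0 < xibar -> Vbar V xibar = V xi ->
  (exists x, Vbar V x <> V (gamma * x)) ->
  exists N, (1 <= N)%nat /\
    (forall k, (1 <= k)%nat -> (k < N)%nat ->
       Derive_n W k (Vs xi) = gamma * Derive_n (Wbar W) k (Vs xi)) /\
    Derive_n W N (Vs xi) <> gamma * Derive_n (Wbar W) N (Vs xi).
Proof.
  intros HUM Hdeg HVs Hxi Hxib Hbar [x0 Hx0].
  destruct (setup V m Vs W xi xibar HUM Hdeg HVs Hxi Hxib Hbar)
    as [Hm [Hs0 [Ws0 [W0 [Wb0 [Wbs0 [VW [VbWb [SW [SWb [SV [SVb [k Hk]]]]]]]]]]]]].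
  destruct HVs as [HVsa [HWa [HWVs [HVsW [_ HVsm]]]]].
  set (s0 := Vs xi) in *.
  destruct (Classical_Prop.classic (exists N, (1 <= N)%nat /\
    (forall k, (1 <= k)%nat -> (k < N)%nat ->
       Derive_n W k s0 = gamma * Derive_n (Wbar W) k s0) /\
    Derive_n W N s0 <> gamma * Derive_n (Wbar W) N s0)) as [YES|NO]; auto.
  exfalso.
  assert (All : forall n k, (1 <= k)%nat -> (k < n)%nat -> Derive_n W k s0 = gamma * Derive_n (Wbar W) k s0).
  { induction n as [|n IH]; intros j Hj1 Hjn. lia.
    destruct (Nat.lt_ge_cases j n) as [Hl|Hg]. apply IH; auto.
    assert (j = n) by lia. subst j.
    destruct (Req_dec (Derive_n W n s0) (gamma * Derive_n (Wbar W) n s0)) as [E|E]; auto.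
    exfalso. apply NO. exists n. split; auto. }
  set (h := fun x => W x - gamma * Wbar W x).
  assert (Hha : real_analytic h).
  { replace h with (fun x => W x - (- gamma) * W (- x)).
    apply ra_lin; auto. apply ra_opp; auto.
    apply functional_extensionality; intro x. unfold h, Wbar. ring. }
  assert (Hhs : smooth h) by (apply smooth_minus; auto; apply smooth_scal; auto).
  assert (Hd : forall x, Derive h x = 0).
  { apply (identity h s0); auto. intros j Hj. unfold h. rewrite Dn_minus; auto.
    rewrite Derive_n_scal_l. rewrite (All (S j) j); auto. ring. apply smooth_scal; auto. }
  assert (Hc : forall x, h x = 0).
  { intro x. destruct (MVT_gen h 0 x (Derive h)) as [c [_ Ec]].
    - intros y _. apply Derive_correct. apply smooth_ex_derive; auto.
    - intros y _. apply continuity_pt_filterlim. apply smooth_cont0; auto.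
    - rewrite Hd in Ec. unfold h in *. rewrite W0, Wb0 in Ec. lra. }
  assert (HW : forall x, W x = - gamma * W (- x)).
  { intro x. pose proof (Hc x). unfold h, Wbar in H. lra. }
  destruct (Req_dec gamma 0) as [G0|G0].
  - pose proof (HW (Vs 1)). rewrite HWVs, G0 in H. lra.
  - apply Hx0. unfold Vbar.
    set (s := Vs (gamma * x0)).
    assert (E1 : W (- s) = - x0).
    { pose proof (HW s). unfold s in H. rewrite HWVs in H. fold s in H.
      apply Rmult_eq_reg_l with gamma; auto. nra. }
    rewrite <- !HVsm. rewrite <- E1, HVsW. fold s. rewrite Hk. apply pow_even_opp.
Qed.

Theorem proposition3p1
  (V : R -> R) (m : nat) (Vs W : R -> R) (xi xibar gamma : R) :
  UM V ->
  is_deg0 V m ->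
  is_Vstar V m Vs W ->
  0 < xi ->
  0 < xibar -> Vbar V xibar = V xi ->
  (exists x, Vbar V x <> V (gamma * x)) ->
  let s0 := Vs xi in
  let cond := fun N : nat =>
    (1 <= N)%nat /\
    (forall k, (1 <= k)%nat -> (k < N)%nat ->
       Derive_n W k s0 = gamma * Derive_n (Wbar W) k s0) /\
    Derive_n W N s0 <> gamma * Derive_n (Wbar W) N s0 in
  let f := fun theta => a_fun V xi theta - gamma * a_fun (Vbar V) xibar theta in
  (exists N, cond N) /\
  (forall N, cond N ->
     (gamma * Derive_n (Wbar W) N s0 > Derive_n W N s0 ->
        filterlim (Dn m N f) (at_right (V xi)) (Rbar_locally p_infty)) /\
     (gamma * Derive_n (Wbar W) N s0 < Derive_n W N s0 ->
        filterlim (Dn m N f) (at_right (V xi)) (Rbar_locally m_infty))).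
Proof.
  intros HUM Hdeg HVs Hxi Hxib Hbar Hex s0 cond f.
  split. { apply (exists_N V m Vs W xi xibar gamma); auto. }
  intros N [HN1 [HNk HNneq]].
  destruct (setup V m Vs W xi xibar HUM Hdeg HVs Hxi Hxib Hbar)
    as [Hm [Hs0 [Ws0 [W0 [Wb0 [Wbs0 [VW [VbWb [SW [SWb [SV [SVb [k Hk]]]]]]]]]]]]].
  fold s0 in Hs0, Ws0, Wbs0.
  assert (Vxi : V xi = s0 ^ m) by (rewrite <- Ws0; apply VW).
  rewrite Vxi.
  set (phi := fun s => Derive W s - gamma * Derive (Wbar W) s).
  assert (Sphi : smooth phi).
  { apply smooth_minus. apply smooth_Derive; auto. apply smooth_scal, smooth_Derive; auto. }
  assert (Hf : forall t, s0 ^ m < t -> f t = / sqrt 2 * Ii m s0 phi t).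
  { intros t Ht. unfold f. apply (f_eq V m Vs W xi xibar gamma t); auto. }
  assert (Dphi : forall i, Derive_n phi i s0 = Derive_n W (S i) s0 - gamma * Derive_n (Wbar W) (S i) s0).
  { intro i. unfold phi. rewrite Dn_minus. rewrite Derive_n_scal_l, !Derive_n_Derive. auto.
    apply smooth_Derive; auto. apply smooth_scal, smooth_Derive; auto. }
  assert (Hvals : forall j, (j <= pred N)%nat -> phis phi j s0 = s0 ^ j * Derive_n phi j s0).
  { intros j Hj. replace (s0 ^ j * Derive_n phi j s0) with (s0 ^ j * Derive_n phi (j + 0) s0) by (rewrite Nat.add_0_r; auto).
    rewrite <- (phis_vals phi Sphi j 0 s0). simpl. auto.
    intros i Hi. rewrite Dphi. rewrite HNk; try lia. ring. }
  assert (Hj : forall j, (j + 2 <= N)%nat -> phis phi j s0 = 0).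
  { intros j Hj. rewrite Hvals by lia. rewrite Dphi, HNk by lia. ring. }
  assert (Hform := Dn_formula m s0 phi f (/ sqrt 2) Hm Sphi Hs0 Hf N HN1 Hj).
  destruct (Ii_bound m s0 (phis phi N) Hm (smooth_phis phi N Sphi) Hs0) as [Mi HMi].
  assert (HmR : 0 < INR m) by (apply lt_0_INR; lia).
  assert (HNR : 0 <= INR N / INR m) by (apply Rdiv_le_0_compat; [apply pos_INR | auto]).
  assert (Hc0 : 0 < s0 ^ m) by (apply pow_lt; auto).
  assert (HK : 0 < / sqrt 2) by (apply Rinv_0_lt_compat, sqrt_lt_R0; lra).
  destruct (lim_final (Dn m N f) (Ii m s0 (phis phi N)) (s0 ^ m) (/ sqrt 2)
     (-1/2 - INR N / INR m) (s0 * phis phi (pred N) s0) Mi Hc0 HK ltac:(lra)) as [L1 L2].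
  { intros th Hth. apply HMi. replace (s0 ^ m + 1) with (s0 ^ m + 1) by ring. lra. }
  { intros th Hth. rewrite Hform by auto. reflexivity. }
  assert (HB : s0 * phis phi (pred N) s0 =
      s0 * s0 ^ pred N * (Derive_n W N s0 - gamma * Derive_n (Wbar W) N s0)).
  { rewrite Hvals by lia. rewrite Dphi. replace (S (pred N)) with N by lia. ring. }
  assert (Hpos : 0 < s0 * s0 ^ pred N) by (apply Rmult_lt_0_compat; auto; apply pow_lt; auto).
  split; intro Hg.
  - apply L1. rewrite HB. nra.
  - apply L2. rewrite HB. nra.
Qed.
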